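(* Suppose that $G$ is a group with a finite-index characteristic subgroup $A\cong\mathbb{Z}^m$, and that there is a homomorphism $\operatorname{sgn}\colon G\to\{1,-1\}$ such that for all $g\in G$ and $x\in A$ we have $g^{-1}xg=x^{\operatorname{sgn}(g)}$. Then the group $P_{A,G}$ of automorphisms of $A$ that extend to automorphisms of $G$ has finite index in $\operatorname{Aut}(A)$. *)

(* Defs.v *)
(* Groups G here are possibly infinite, so they are given as a carrier type
   with explicit operations and axioms. *)
From Stdlib Require List.
From mathcomp Require Import all_boot all_order all_algebra.
Set Implicit Arguments. Unset Strict Implicit. Unset Printing Implicit Defensive.
Import GRing.Theory Num.Theory.
Local Open Scope ring_scope.

Section GroupDefs.
Variables (T : Type) (mul : T -> T -> T) (one : T) (inv : T -> T).

Definition is_group : Prop :=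
  [/\ (forall x y z, mul x (mul y z) = mul (mul x y) z),
      (forall x, mul one x = x), (forall x, mul x one = x),
      (forall x, mul (inv x) x = one) & (forall x, mul x (inv x) = one)].

Definition is_subgroup (A : T -> Prop) : Prop :=
  [/\ A one, (forall x y, A x -> A y -> A (mul x y)) & (forall x, A x -> A (inv x))].

Definition finite_index (A : T -> Prop) : Prop :=
  exists s : list T, forall g, exists2 r, List.In r s & A (mul (inv r) g).

Definition is_aut (f : T -> T) : Prop :=
  (forall x y, f (mul x y) = mul (f x) (f y)) /\
  exists g : T -> T, (forall x, g (f x) = x) /\ (forall x, f (g x) = x).

Definition characteristic (A : T -> Prop) : Prop :=
  forall f, is_aut f -> forall x, A (f x) <-> A x.

Definition iso_Zm (A : T -> Prop) (m : nat) : Prop :=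
  exists phi : T -> 'rV[int]_m,
    [/\ (forall x y, A x -> A y -> phi (mul x y) = phi x + phi y),
        (forall x y, A x -> A y -> phi x = phi y -> x = y) &
        (forall v, exists2 x, A x & phi x = v)].

Definition is_autA (A : T -> Prop) (a : T -> T) : Prop :=
  [/\ (forall x, A x -> A (a x)),
      (forall x y, A x -> A y -> a (mul x y) = mul (a x) (a y)) &
      exists b : T -> T, [/\ (forall x, A x -> A (b x)),
                             (forall x, A x -> b (a x) = x) &
                             (forall x, A x -> a (b x) = x)]].

Definition extends_to_aut (A : T -> Prop) (a : T -> T) : Prop :=
  is_autA A a /\ exists f, is_aut f /\ forall x, A x -> f x = a x.

(* P_{A,G} has finite index in Aut(A): finitely many automorphisms r of A
   such that every automorphism of A lies in some left coset r P_{A,G}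
   (equality of automorphisms of A = pointwise equality on A). *)
Definition PAG_finite_index (A : T -> Prop) : Prop :=
  exists s : list (T -> T),
    (forall r, List.In r s -> is_autA A r) /\
    forall a, is_autA A a ->
      exists2 r, List.In r s &
        exists2 p, extends_to_aut A p & forall x, A x -> a x = r (p x).

End GroupDefs.

(* Main.v *)
Require Import Defs.
From mathcomp Require Import all_boot all_order all_algebra.
From Stdlib Require Import ClassicalEpsilon.
Set Implicit Arguments. Unset Strict Implicit. Unset Printing Implicit Defensive.
Import GRing.Theory Num.Theory.
Local Open Scope ring_scope.

Section Grp.
Variables (T : Type) (mul : T -> T -> T) (one : T) (inv : T -> T).
Hypothesis HG : is_group mul one inv.

Lemma gA x y z : mul (mul x y) z = mul x (mul y z).
Proof. by case: HG => H _ _ _ _; rewrite H. Qed.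
Lemma g1l x : mul one x = x. Proof. by case: HG. Qed.
Lemma g1r x : mul x one = x. Proof. by case: HG. Qed.
Lemma gVl x : mul (inv x) x = one. Proof. by case: HG. Qed.
Lemma gVr x : mul x (inv x) = one. Proof. by case: HG. Qed.
Lemma gKl x y : mul (inv x) (mul x y) = y.
Proof. by rewrite -gA gVl g1l. Qed.
Lemma gKr x y : mul x (mul (inv x) y) = y.
Proof. by rewrite -gA gVr g1l. Qed.
Lemma gcanl x y z : mul x y = mul x z -> y = z.
Proof. by move=> H; rewrite -(gKl x y) H gKl. Qed.
Lemma ginv_uniq x y : mul x y = one -> y = inv x.
Proof. by move=> H; rewrite -(gKl x y) H g1r. Qed.
Lemma gVV x : inv (inv x) = x.
Proof. by symmetry; apply: ginv_uniq; rewrite gVl. Qed.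
Lemma gVM x y : inv (mul x y) = mul (inv y) (inv x).
Proof. by symmetry; apply: ginv_uniq; rewrite gA gKr gVr. Qed.
Lemma gV1 : inv one = one.
Proof. by symmetry; apply: ginv_uniq; rewrite g1l. Qed.
Lemma gKVl x y : mul (inv x) (mul (inv (inv x)) y) = y.
Proof. by rewrite gVV gKl. Qed.
Lemma gid_one x : mul x x = x -> x = one.
Proof. by move=> H; rewrite -(gKl x x) H gVl. Qed.
End Grp.

Ltac gsimpl HG := repeat (rewrite ?(gA HG) ?(gKl HG) ?(gKr HG) ?(gVl HG) ?(gVr HG) ?(g1l HG) ?(g1r HG) ?(gVM HG) ?(gVV HG) ?(gV1 HG)).

Section Addv.
Variable m : nat.
Variable F : 'rV[int]_m -> 'rV[int]_m.
Hypothesis HF : forall u w, F (u + w) = F u + F w.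
Lemma F0 : F 0 = 0.
Proof. have H := HF 0 0; rewrite addr0 in H; apply: (addrI (F 0)); by rewrite -H addr0. Qed.
Lemma FN u : F (- u) = - F u.
Proof. apply: (addrI (F u)); by rewrite -HF subrr F0 subrr. Qed.
Lemma FB u w : F (u - w) = F u - F w.
Proof. by rewrite HF FN. Qed.
Lemma FMn u n : F (u *+ n) = F u *+ n.
Proof. by elim: n => [|n IH]; rewrite ?mulr0n ?F0 // !mulrS HF IH. Qed.
Lemma FZ (z : int) u : F (z *: u) = z *: F u.
Proof.
case: z => n; first by rewrite -natz !scaler_nat FMn.
by rewrite NegzE -natz !scaleNr !scaler_nat FN FMn.
Qed.
Lemma Fsum (I : finType) (G : I -> 'rV[int]_m) : F (\sum_i G i) = \sum_i F (G i).
Proof.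
apply: (big_ind2 (fun a b => F a = b)); first exact: F0.
  by move=> a b c d <- <-; rewrite HF.
by [].
Qed.
End Addv.

Section Dedup.
Variables (T : Type) (mul : T -> T -> T) (one : T) (inv : T -> T).
Hypothesis HG : is_group mul one inv.
Variable A : T -> Prop.
Hypothesis HA : is_subgroup mul one inv A.
Lemma A1 : A one. Proof. by case: HA. Qed.
Lemma AM x y : A x -> A y -> A (mul x y). Proof. by case: HA => _ H _; apply: H. Qed.
Lemma AV x : A x -> A (inv x). Proof. by case: HA => _ _ H; apply: H. Qed.
Lemma AVM x y : A x -> A y -> A (mul (inv x) y). Proof. by move=> *; apply: AM; rewrite //; apply: AV. Qed.

Lemma dedup (s : seq T) : exists t : seq T,
 (forall g, (exists2 r, List.In r s & A (mul (inv r) g)) ->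
     exists2 i, (i < size t)%N & A (mul (inv (nth one t i)) g)) /\
 (forall i j, (i < size t)%N -> (j < size t)%N ->
     A (mul (inv (nth one t i)) (nth one t j)) -> i = j).
Proof.
elim: s => [|r s [t [Hc Hd]]].
  by exists [::]; split => // g [r []].
case: (classic (exists2 i, (i < size t)%N & A (mul (inv (nth one t i)) r))).
  case=> i Hi Hir; exists t; split => // g [r' /= [<-|Hr'] Hg].
    exists i => //; have := AM Hir Hg; by rewrite (gA HG) (gKr HG).
  by apply: Hc; exists r'.
move=> Hn; exists (r :: t); split.
  move=> g [r' /= [<-|Hr'] Hg]; first by exists 0%N.
  by case: (Hc g) => [|i Hi Hig]; [exists r' | exists i.+1].
case=> [|i] [|j] //= Hi Hj Hij.
- by exfalso; apply: Hn; exists j => //; rewrite -(gVV HG r) -(gVM HG); apply: AV.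
- by exfalso; apply: Hn; exists i.
- by congr S; apply: Hd.
Qed.
End Dedup.

Section Main.
Variables (T : Type) (mul : T -> T -> T) (one : T) (inv : T -> T).
Hypothesis HG : is_group mul one inv.
Variable A : T -> Prop.
Hypothesis HA : is_subgroup mul one inv A.
Variable m : nat.
Variable phi : T -> 'rV[int]_m.
Hypothesis phiM : forall x y, A x -> A y -> phi (mul x y) = phi x + phi y.
Hypothesis phi_inj : forall x y, A x -> A y -> phi x = phi y -> x = y.
Hypothesis phi_surj : forall v, exists2 x, A x & phi x = v.
Variable sgn : T -> int.
Hypothesis Hsgn_val : forall g, sgn g = 1 \/ sgn g = -1.
Hypothesis Hsgn_hom : forall g h, sgn (mul g h) = sgn g * sgn h.
Hypothesis Hconj : forall g x, A x ->
     mul (inv g) (mul x g) = (if sgn g == 1 then x else inv x).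

Let A1' := A1 HA.
Let AM' := AM HA.
Let AV' := AV HA.

Lemma phi1 : phi one = 0.
Proof.
have H := phiM A1' A1'; rewrite (g1l HG) in H.
by apply: (addrI (phi one)); rewrite -H addr0.
Qed.
Lemma phiV x : A x -> phi (inv x) = - phi x.
Proof.
move=> Ax; apply: (addrI (phi x)); rewrite -phiM ?(gVr HG) ?phi1 ?subrr //.
exact: AV'.
Qed.

Definition psi (v : 'rV[int]_m) : T :=
  proj1_sig (constructive_indefinite_description _
    (let: ex_intro2 x H1 H2 := phi_surj v in ex_intro (fun x => A x /\ phi x = v) x (conj H1 H2))).
Lemma psi_spec v : A (psi v) /\ phi (psi v) = v.
Proof. rewrite /psi; by case: constructive_indefinite_description. Qed.
Lemma psiA v : A (psi v). Proof. by case: (psi_spec v). Qed.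
Lemma phi_psi v : phi (psi v) = v. Proof. by case: (psi_spec v). Qed.
Lemma psi_phi x : A x -> psi (phi x) = x.
Proof. by move=> Ax; apply: phi_inj; [exact: psiA | done | rewrite phi_psi]. Qed.
Lemma psiD u w : psi (u + w) = mul (psi u) (psi w).
Proof. apply: phi_inj; [exact: psiA | apply: AM'; exact: psiA | by rewrite phiM ?phi_psi //; exact: psiA]. Qed.
Lemma psiN u : psi (- u) = inv (psi u).
Proof. apply: phi_inj; [exact: psiA | apply: AV'; exact: psiA | by rewrite phiV ?phi_psi //; exact: psiA]. Qed.

Lemma sgn_sq g : sgn g * sgn g = 1.
Proof. by case: (Hsgn_val g) => ->. Qed.

Lemma conj_psi h y : A y -> mul (inv h) (mul y h) = psi (sgn h *: phi y).
Proof.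
move=> Ay; rewrite Hconj //; case: (Hsgn_val h) => ->.
  by rewrite eqxx scale1r psi_phi.
have -> : ((-1 : int) == 1) = false by [].
by rewrite scaleN1r psiN psi_phi.
Qed.

Lemma abelian x y : A x -> A y -> mul x y = mul y x.
Proof. by move=> Ax Ay; apply: phi_inj; [exact: AM' | exact: AM' | rewrite !phiM // addrC]. Qed.

Lemma sgnA : (forall v : 'rV[int]_m, v = 0) \/ (forall a, A a -> sgn a = 1).
Proof.
case: (classic (exists2 a, A a & sgn a = -1)) => [[a Aa Hs]|Hn]; [left|right].
  move=> v; have := Hconj a (psiA v); rewrite Hs (abelian (psiA v) Aa) (gKl HG).
  have -> : ((-1 : int) == 1) = false by [].
  move=> /(congr1 phi); rewrite (phiV (psiA v)) phi_psi => /eqP.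
  rewrite -subr_eq0 opprK => /eqP H; apply/matrixP => i j; rewrite [RHS]mxE.
  have := congr1 (fun M : 'rV[int]_m => M i j) H; rewrite !mxE => /eqP.
  by rewrite -mulr2n mulrn_eq0 /= => /eqP.
move=> a Aa; case: (Hsgn_val a) => // H; exfalso; exact: Hn (ex_intro2 _ _ a Aa H).
Qed.



Variable t : seq T.
Hypothesis tcov : forall g, exists2 i, (i < size t)%N & A (mul (inv (nth one t i)) g).
Hypothesis tdist : forall i j, (i < size t)%N -> (j < size t)%N ->
     A (mul (inv (nth one t i)) (nth one t j)) -> i = j.

Definition k := size t.
Definition Tn (i : 'I_k) := nth one t i.

Lemma cov_ord g : exists i : 'I_k, A (mul (inv (Tn i)) g).
Proof. by case: (tcov g) => i Hi Hg; exists (Ordinal Hi). Qed.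

Definition cidx g : 'I_k := proj1_sig (constructive_indefinite_description _ (cov_ord g)).
Lemma cidx_spec g : A (mul (inv (Tn (cidx g))) g).
Proof. rewrite /cidx; by case: constructive_indefinite_description. Qed.

Lemma invmul_z z x y : mul (inv (mul z x)) (mul z y) = mul (inv x) y.
Proof. by gsimpl HG. Qed.

Lemma cidx_uniq g i : A (mul (inv (Tn i)) g) -> cidx g = i.
Proof.
move=> H; apply: val_inj; apply: tdist; rewrite ?ltn_ord //.
move: (AM' (cidx_spec g) (AV' H)); rewrite /Tn; gsimpl HG; exact: id.
Qed.

Definition pi g i := cidx (mul g (Tn i)).
Definition ai g i := mul (inv (Tn (pi g i))) (mul g (Tn i)).
Lemma aiA g i : A (ai g i). Proof. exact: cidx_spec. Qed.

Lemma pi_inj g : injective (pi g).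
Proof.
move=> i j Hij; apply: val_inj; apply: tdist; rewrite ?ltn_ord //.
move: (AVM HA (aiA g i) (aiA g j)); rewrite /ai Hij /Tn; gsimpl HG; exact: id.
Qed.

Lemma ai_decomp g i : mul (Tn (pi g i)) (ai g i) = mul g (Tn i).
Proof. by rewrite /ai (gKr HG). Qed.

Lemma ai_mul g h i : mul (ai g (pi h i)) (ai h i) = ai (mul g h) i /\ pi (mul g h) i = pi g (pi h i).
Proof.
have E : mul (ai g (pi h i)) (ai h i) = mul (inv (Tn (pi g (pi h i)))) (mul (mul g h) (Tn i)).
  by rewrite /ai; gsimpl HG.
have P : pi (mul g h) i = pi g (pi h i).
  by apply: cidx_uniq; rewrite -E; apply: AM'; apply: aiA.
by split => //; rewrite E /ai P.
Qed.

Lemma sgn_rel h i : sgn (Tn (pi h i)) * sgn (ai h i) = sgn h * sgn (Tn i).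
Proof. by rewrite -!Hsgn_hom ai_decomp. Qed.

Definition Gam g := \sum_(i < k) sgn (Tn i) *: phi (ai g i).

Lemma Gam_mul g h : Gam (mul g h) = sgn h *: Gam g + Gam h.
Proof.
case: sgnA => [H0|Hs]; first by rewrite (H0 (Gam (mul g h))) (H0 (sgn h *: Gam g + Gam h)).
rewrite /Gam.
have -> : \sum_(i < k) sgn (Tn i) *: phi (ai (mul g h) i) =
   \sum_(i < k) (sgn h *: (sgn (Tn (pi h i)) *: phi (ai g (pi h i))) + sgn (Tn i) *: phi (ai h i)).
  apply: eq_bigr => i _; case: (ai_mul g h i) => <- _.
  rewrite phiM; [|exact: aiA|exact: aiA]. rewrite scalerDr scalerA; congr (_ *: _ + _).
  have := sgn_rel h i; rewrite (Hs _ (aiA h i)) mulr1 => ->.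
  by rewrite mulrA sgn_sq mul1r.
rewrite big_split /=; congr (_ + _); rewrite -scaler_sumr; congr (_ *: _).
by rewrite [RHS](reindex_inj (@pi_inj h)).
Qed.

Lemma pi_A x i : A x -> pi x i = i.
Proof.
move=> Ax; apply: cidx_uniq; rewrite Hconj //.
by case: ifP => _ //; apply: AV'.
Qed.

Lemma Gam_A x : A x -> Gam x = phi x *+ k.
Proof.
move=> Ax; rewrite /Gam.
rewrite (eq_bigr (fun _ => phi x)); last first.
  move=> i _; rewrite /ai pi_A // conj_psi // phi_psi scalerA sgn_sq scale1r //.
by rewrite sumr_const card_ord.
Qed.

Lemma k_gt0 : (0 < k)%N.
Proof. by case: (tcov one) => i Hi _; rewrite /k; apply: leq_ltn_trans Hi. Qed.
Lemma kz_neq0 : (k%:Z) != 0.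
Proof. by move: k_gt0; case: k. Qed.

Variable p : T -> T.
Hypothesis Hp : is_autA mul A p.
Hypothesis HD : forall v i j, (k%:Z %| (phi (p (psi v)) - v) i j)%Z.

Lemma pA x : A x -> A (p x). Proof. by case: Hp => H _ _; apply: H. Qed.
Lemma pM x y : A x -> A y -> p (mul x y) = mul (p x) (p y). Proof. by case: Hp => _ H _; apply: H. Qed.
Lemma p_inj x y : A x -> A y -> p x = p y -> x = y.
Proof. case: Hp => _ _ [b [_ H _]] Ax Ay E; by rewrite -(H x Ax) E H. Qed.
Lemma p_surj y : A y -> exists2 x, A x & p x = y.
Proof. case: Hp => _ _ [b [Hb _ H]] Ay; exists (b y); [exact: Hb | exact: H]. Qed.
Lemma p1 : p one = one.
Proof. apply: (gid_one HG); by rewrite -pM ?(g1l HG). Qed.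

Definition Dv v := phi (p (psi v)) - v.
Lemma Dv_add u w : Dv (u + w) = Dv u + Dv w.
Proof.
rewrite /Dv psiD pM; [|exact: psiA|exact: psiA].
rewrite phiM; [|apply: pA; exact: psiA|apply: pA; exact: psiA].
by rewrite opprD addrACA.
Qed.

Definition Bv v := map_mx (fun z => (z %/ k%:Z)%Z) (Dv v).
Lemma Bv_add u w : Bv (u + w) = Bv u + Bv w.
Proof.
apply/matrixP => i j; rewrite /Bv Dv_add !mxE divzDl //; move: (HD u i j); by rewrite !mxE.
Qed.
Lemma Bv_k v : Bv (v *+ k) = Dv v.
Proof.
rewrite /Bv (FMn Dv_add) -scaler_nat natz; apply/matrixP => i j.
by rewrite !mxE mulKz // kz_neq0.
Qed.

Definition beta g := psi (Bv (Gam g)).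
Definition f g := mul g (beta g).

Lemma f_hom g h : f (mul g h) = mul (f g) (f h).
Proof.
rewrite /f /beta Gam_mul Bv_add (FZ Bv_add) psiD.
rewrite -[X in psi (_ *: X)](phi_psi) -conj_psi; [by gsimpl HG | exact: psiA].
Qed.

Lemma f_ext x : A x -> f x = p x.
Proof.
move=> Ax; apply: phi_inj.
- by apply: AM'; [done | exact: psiA].
- exact: pA.
rewrite /f /beta phiM; [|done|exact: psiA]. rewrite phi_psi Gam_A // Bv_k /Dv psi_phi //.
by rewrite addrC subrK.
Qed.

Lemma f_inj g h : f g = f h -> g = h.
Proof.
rewrite /f => E.
have Eg : g = mul h (mul (beta h) (inv (beta g))).
  by rewrite -(gA HG) -E; gsimpl HG.
have Au : A (mul (beta h) (inv (beta g))) by apply: AM'; [exact: psiA | apply: AV'; exact: psiA].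
have : f g = mul (f h) (p (mul (beta h) (inv (beta g)))).
  by rewrite -f_ext // -f_hom -Eg.
rewrite /f E => H.
have : p (mul (beta h) (inv (beta g))) = p one.
  have H2 := f_equal (mul (inv (mul h (beta h)))) H.
  by rewrite (gKl HG) (gVl HG) in H2; rewrite p1 H2.
move=> Hp1; have Hu := p_inj Au A1' Hp1.
by rewrite Eg Hu (g1r HG).
Qed.

Lemma f_surj y : exists x, f x = y.
Proof.
have Ab : A (inv (beta y)) by apply: AV'; exact: psiA.
case: (p_surj Ab) => z Az Hz; exists (mul y z).
by rewrite f_hom (f_ext Az) Hz /f /beta; gsimpl HG.
Qed.

Lemma f_aut : is_aut mul f.
Proof.
split; first exact: f_hom.
pose fi y := proj1_sig (constructive_indefinite_description _ (f_surj y)).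
have fiK y : f (fi y) = y by rewrite /fi; case: constructive_indefinite_description.
exists fi; split => // x; apply: f_inj; exact: fiK.
Qed.

Lemma p_extends : extends_to_aut mul A p.
Proof. split => //; exists f; split; [exact: f_aut | exact: f_ext]. Qed.

End Main.

Lemma In_map_seq (X Y : Type) (f : X -> Y) (l : seq X) r :
  List.In r (map f l) -> exists x, r = f x.
Proof. elim: l => //= x l IH [<-|/IH //]; by exists x. Qed.
Lemma In_map_mem (X : eqType) (Y : Type) (f : X -> Y) (l : seq X) x :
  x \in l -> List.In (f x) (map f l).
Proof.
elim: l => //= y l IH; rewrite in_cons => /orP [/eqP ->|/IH]; [by left | by right].
Qed.

Section Fin.
Variables (T : Type) (mul : T -> T -> T) (one : T) (inv : T -> T).
Hypothesis HG : is_group mul one inv.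
Variable A : T -> Prop.
Hypothesis HA : is_subgroup mul one inv A.
Variable m : nat.
Variable phi : T -> 'rV[int]_m.
Hypothesis phiM : forall x y, A x -> A y -> phi (mul x y) = phi x + phi y.
Hypothesis phi_inj : forall x y, A x -> A y -> phi x = phi y -> x = y.
Hypothesis phi_surj : forall v, exists2 x, A x & phi x = v.
Variable kk : nat.

Let ps := psi phi_surj.
Let psA v : A (ps v) := psiA phi_surj v.
Let phps v : phi (ps v) = v := phi_psi phi_surj v.
Let psph x : A x -> ps (phi x) = x := psi_phi phi_inj phi_surj (x:=x).

Lemma autA_id : is_autA mul A id.
Proof. split => //; by exists id. Qed.

Lemma autA_inv a b : is_autA mul A a -> (forall x, A x -> A (b x)) ->
  (forall x, A x -> b (a x) = x) -> (forall x, A x -> a (b x) = x) -> is_autA mul A b.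
Proof.
case=> aA aM _ bA ba ab; split => //.
  move=> x y Ax Ay.
  have Hinj : forall u v, A u -> A v -> a u = a v -> u = v.
    by move=> u v Au Av E; rewrite -(ba u Au) E ba.
  apply: Hinj.
  - by apply: bA; apply: (AM HA).
  - by apply: (AM HA); apply: bA.
  by rewrite aM ?ab //; [apply: (AM HA) | apply: bA | apply: bA].
by exists a.
Qed.

Lemma autA_comp a b : is_autA mul A a -> is_autA mul A b -> is_autA mul A (fun x => b (a x)).
Proof.
case=> aA aM [a' [a'A a'a aa']] [bA bM [b' [b'A b'b bb']]]; split.
- by move=> x Ax; apply: bA; apply: aA.
- by move=> x y Ax Ay; rewrite aM // bM //; apply: aA.
exists (fun x => a' (b' x)); split.
- by move=> x Ax; apply: a'A; apply: b'A.
- by move=> x Ax; rewrite b'b ?a'a //; apply: aA.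
- by move=> x Ax; rewrite aa' ?bb' //; apply: b'A.
Qed.

Definition Fv (a : T -> T) v := phi (a (ps v)).
Lemma Fv_add a : is_autA mul A a -> forall u w, Fv a (u + w) = Fv a u + Fv a w.
Proof.
case=> aA aM _ u w; rewrite /Fv /ps (psiD HA phiM phi_inj phi_surj) aM ?phiM //; by [apply: aA | apply: psA].
Qed.

Definition Cg (v : 'rV[int]_m) := forall i j, (kk%:Z %| v i j)%Z.
Lemma Cg0 : Cg 0. Proof. by move=> i j; rewrite mxE dvdz0. Qed.
Lemma CgD u w : Cg u -> Cg w -> Cg (u + w).
Proof. by move=> Hu Hw i j; rewrite mxE rpredD. Qed.
Lemma CgZ z u : Cg u -> Cg (z *: u).
Proof. by move=> Hu i j; rewrite mxE dvdz_mull. Qed.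
Lemma CgMn u : Cg (u *+ kk).
Proof. by move=> i j; rewrite -scaler_nat natz mxE dvdz_mulr. Qed.
Lemma Cg_ex u : Cg u -> u = map_mx (fun z => (z %/ kk%:Z)%Z) u *+ kk.
Proof.
move=> Hu; rewrite -scaler_nat natz; apply/matrixP => i j; rewrite !mxE mulrC divzK //.
Qed.

Definition K := {ffun 'I_m * 'I_m -> 'I_kk.+1}.
Definition key (a : T -> T) : K :=
  [ffun ij : 'I_m * 'I_m => inord (absz (modz (Fv a (delta_mx 0 ij.2) 0 ij.1) kk%:Z))].

Hypothesis kk_gt0 : (0 < kk)%N.

Lemma key_cong a r : is_autA mul A a -> is_autA mul A r -> key a = key r ->
  forall v, Cg (Fv a v - Fv r v).
Proof.
move=> Ha Hr Hk v.
have kz : kk%:Z != 0 by rewrite eqz_nat -lt0n.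
have Hb : forall j, Cg (Fv a (delta_mx 0 j) - Fv r (delta_mx 0 j)).
  move=> j i' i; rewrite (ord1 i') mxE.
  have := congr1 (fun f : K => f (i, j)) Hk; rewrite !ffunE /=.
  move/(congr1 (@nat_of_ord kk.+1)); rewrite !inordK; last first.
    - rewrite ltnS -lez_nat gez0_abs ?(modz_ge0 _ kz) //; apply: Order.POrderTheory.ltW; apply: ltz_pmod; by rewrite ltz_nat.
    - rewrite ltnS -lez_nat gez0_abs ?(modz_ge0 _ kz) //; apply: Order.POrderTheory.ltW; apply: ltz_pmod; by rewrite ltz_nat.
  move/(congr1 Posz); rewrite !gez0_abs ?(modz_ge0 _ kz) // => /eqP.
  by rewrite mxE -eqz_mod_dvd.
rewrite (row_sum_delta v) (Fsum (Fv_add Ha)) (Fsum (Fv_add Hr)) -sumrB.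
apply: (big_ind Cg); [exact: Cg0 | exact: CgD |] => j _.
rewrite (FZ (Fv_add Ha)) (FZ (Fv_add Hr)) -scalerBr; apply: CgZ; exact: Hb.
Qed.

Lemma inv_cong b : is_autA mul A b -> forall u, Cg u -> Cg (Fv b u).
Proof.
move=> Hb u Hu; rewrite (Cg_ex Hu) (FMn (Fv_add Hb)); exact: CgMn.
Qed.

Definition chooseK (c : K) : T -> T :=
  match excluded_middle_informative (exists a, is_autA mul A a /\ key a = c) with
  | left H => proj1_sig (constructive_indefinite_description _ H)
  | right _ => id
  end.
Lemma chooseK_aut c : is_autA mul A (chooseK c).
Proof.
rewrite /chooseK; case: excluded_middle_informative => [H|_]; last exact: autA_id.
by case: constructive_indefinite_description => a [].
Qed.
Lemma chooseK_key a : is_autA mul A a -> key (chooseK (key a)) = key a.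
Proof.
move=> Ha; rewrite /chooseK; case: excluded_middle_informative => [H|H].
  by case: constructive_indefinite_description => b [].
by exfalso; apply: H; exists a.
Qed.

Lemma fin_main (D : (T -> T) -> Prop) :
  (forall p, is_autA mul A p -> (forall v i j, (kk%:Z %| (phi (p (ps v)) - v) i j)%Z) -> D p) ->
  exists s : list (T -> T),
    (forall r, List.In r s -> is_autA mul A r) /\
    forall a, is_autA mul A a ->
      exists2 r, List.In r s &
        exists2 p, D p & forall x, A x -> a x = r (p x).
Proof.
move=> HD; exists (map chooseK (enum K)); split.
  by move=> r Hr; case: (In_map_seq Hr) => c ->; exact: chooseK_aut.
move=> a Ha; exists (chooseK (key a)); first by apply: In_map_mem; rewrite mem_enum.
set r := chooseK (key a).
have Hr : is_autA mul A r := chooseK_aut _.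
have Hkey : key a = key r by rewrite /r chooseK_key.
case: (Hr) => rA rM [rb [rbA rbr rrb]].
have Hrb : is_autA mul A rb := autA_inv Hr rbA rbr rrb.
case: (Ha) => aA _ _.
exists (fun x => rb (a x)); last by move=> x Ax; rewrite rrb //; apply: aA.
apply: HD; first exact: autA_comp.
move=> v.
set w := phi (rb (a (ps v))).
have E1 : Fv r w = Fv a v by rewrite /Fv /w psph ?rrb //; [apply: aA | apply: rbA; apply: aA]; apply: psA.
have E2 : forall x, Fv rb (Fv r x) = x.
  move=> x; rewrite /Fv psph; last by apply: rA; apply: psA.
  rewrite rbr; [by rewrite phps | exact: psA].
have -> : w - v = Fv rb (Fv a v - Fv r v).
  by rewrite (FB (Fv_add Hrb)) -E1 !E2.
apply: inv_cong => //; apply: key_cong => //.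
Qed.

End Fin.

Theorem mainTheorem19 (T : Type) (mul : T -> T -> T) (one : T) (inv : T -> T)
  (HG : is_group mul one inv) (A : T -> Prop) (m : nat)
  (HA : is_subgroup mul one inv A) (Hfin : finite_index mul inv A)
  (Hchar : characteristic mul A) (HZm : iso_Zm mul A m)
  (sgn : T -> int)
  (Hsgn_val : forall g, sgn g = 1 \/ sgn g = -1)
  (Hsgn_hom : forall g h, sgn (mul g h) = sgn g * sgn h)
  (Hconj : forall g x, A x ->
     mul (inv g) (mul x g) = (if sgn g == 1 then x else inv x)) :
  PAG_finite_index mul A.
Proof.
case: HZm => phi [phiM phi_inj phi_surj].
case: Hfin => s Hs.
have [t [Hc Hd]] := dedup HG HA s.
have tcov : forall g, exists2 i, (i < size t)%N & A (mul (inv (nth one t i)) g).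
  by move=> g; apply: Hc; apply: Hs.
have kpos : (0 < size t)%N by case: (tcov one) => i Hi _; apply: leq_ltn_trans Hi.
have [s' [H1 H2]] := @fin_main T mul one inv A HA m phi phiM phi_inj phi_surj (size t) kpos
  (extends_to_aut mul A)
  (fun p Hp HDp => p_extends HG HA phiM phi_inj Hsgn_val Hsgn_hom Hconj tcov Hd Hp HDp).
by exists s'.
Qed.
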